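(* $H$ is constant on each connected component of $\Gamma$.
   Context: Let $G=(\mathbb{V},E)$ be a finite graph with adjacency $\sim$. Let $a_{ij}=a_{ji}\ge0$ ($>0$ only if $i\sim j$) and $p_{ij}=p_{ji}\in[0,1]$ ($=0$ if $i\not\sim j$), with some $a_{ij}p_{ij}>0$. Fix $h_1\in(0,1]$; $\Delta$ is the set of arrays $x=(x_{ij})_{i,j\in\mathbb{V}}$ with $x_{ij}=x_{ji}\ge0$, $x_{ij}=0$ if $i\not\sim j$, $\sum_{i,j}x_{ij}=1$, $\sum_{(i,j):a_{ij}p_{ij}>0}x_{ij}\ge h_1$; $x_i=\sum_jx_{ij}$. $H(x)=\sum_{(i,j):x_{ij}>0}a_{ij}p_{ij}x_{ij}^2/(x_ix_j)$; $F(x)_{ij}=x_{ij}\big(a_{ij}p_{ij}\frac{x_{ij}}{x_ix_j}-H(x)\big)$, with $F_{ij}=0$ if $x_{ij}=0$ and $a_{ij}p_{ij}x_{ij}/(x_ix_j):=0$ if $a_{ij}p_{ij}=0$. $\Gamma=\{x\in\Delta:F(x)=0\}$ (with the topology induced from $\mathbb{R}^{\mathbb{V}\times\mathbb{V}}$). *)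

(* Defs.v *)
From HB Require Import structures.
From mathcomp Require Import all_boot all_order all_algebra.
From mathcomp Require Import all_classical all_reals all_analysis.
Import numFieldNormedType.Exports.
Set Implicit Arguments. Unset Strict Implicit. Unset Printing Implicit Defensive.
Import Order.TTheory GRing.Theory Num.Theory.
Local Open Scope classical_set_scope.
Local Open Scope ring_scope.

(* Vertex set V = 'I_n; arrays x = (x_ij) are n x n real matrices,
   'M[R]_n, carrying MathComp-Analysis' standard (normed, product) topology. *)

Section Defs.
Variables (R : realType) (n : nat).
Implicit Types (x a p : 'M[R]_n).

Definition xv x (i : 'I_n) : R := \sum_(j < n) x i j.

Definition Hfun a p x : R :=
  \sum_(i < n) \sum_(j < n | 0 < x i j)
     a i j * p i j * x i j ^+ 2 / (xv x i * xv x j).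

Definition ratio a p x (i j : 'I_n) : R :=
  if a i j * p i j == 0 then 0 else a i j * p i j * x i j / (xv x i * xv x j).

Definition Ffun a p x : 'M[R]_n :=
  \matrix_(i, j) (if x i j == 0 then 0 else x i j * (ratio a p x i j - Hfun a p x)).

Definition Delta (adj : rel 'I_n) a p (h1 : R) : set 'M[R]_n :=
  [set x | [/\ (forall i j, x i j = x j i),
              (forall i j, 0 <= x i j),
              (forall i j, ~~ adj i j -> x i j = 0),
              \sum_(i < n) \sum_(j < n) x i j = 1 &
              h1 <= \sum_(i < n) \sum_(j < n | 0 < a i j * p i j) x i j]].

Definition Gamma (adj : rel 'I_n) a p (h1 : R) : set 'M[R]_n :=
  [set x | Delta adj a p h1 x /\ Ffun a p x = 0].

End Defs.

(* Main.v *)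
Require Import Defs.
From HB Require Import structures.
From mathcomp Require Import all_boot all_order all_algebra.
From mathcomp Require Import all_classical all_reals all_analysis.
From mathcomp Require Import ring lra.
Import numFieldNormedType.Exports.
Import Order.TTheory GRing.Theory Num.Theory.
Local Open Scope classical_set_scope.
Local Open Scope ring_scope.
Set Implicit Arguments. Unset Strict Implicit.

Lemma sum_ge_term (R : realType) (I : finType) (F : I -> R) i0 :
  (forall i, 0 <= F i) -> F i0 <= \sum_i F i.
Proof.
move=> F0; rewrite (bigD1 i0) //= lerDl; exact: sumr_ge0.
Qed.

Lemma entry_le_xv {R : realType} {n} (x : 'M[R]_n) i j :
  (forall i j, 0 <= x i j) -> x i j <= xv x i.
Proof. by move=> x0; rewrite /xv; apply: (@sum_ge_term _ _ (fun j => x i j)). Qed.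

Lemma H_gt0 (R : realType) n adj (a p : 'M[R]_n) h1 x :
  (forall i j, 0 <= a i j * p i j) -> 0 < h1 ->
  Gamma adj a p h1 x -> 0 < Hfun a p x.
Proof.
move=> b0 h0 [[xs x0 _ _ hs] _].
have [k [l [bkl xkl]]] : exists k l, 0 < a k l * p k l /\ 0 < x k l.
  apply: contrapT => Hn.
  suff : \sum_(i < n) \sum_(j < n | 0 < a i j * p i j) x i j = 0.
    by move=> E; move: hs; rewrite E => /(lt_le_trans h0); rewrite ltxx.
  apply: big1 => i _; apply: big1 => j bij.
  apply/eqP; rewrite eq_le x0 andbT leNgt; apply/negP => xij.
  by apply: Hn; exists i, j.
have t0 : forall i j, 0 <= (if 0 < x i j then
     a i j * p i j * x i j ^+ 2 / (xv x i * xv x j) else 0).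
  move=> i j; case: ifPn => // xij.
  have xi := lt_le_trans xij (entry_le_xv i j x0).
  have xj : 0 < xv x j by rewrite (lt_le_trans xij) // xs entry_le_xv.
  apply: divr_ge0; first by apply: mulr_ge0 => //; exact: sqr_ge0.
  by apply: mulr_ge0; exact: ltW.
apply: (lt_le_trans _ (@sum_ge_term _ _ _ k _)); last first.
  by move=> i; rewrite big_mkcond /=; apply: sumr_ge0 => j _; exact: t0.
rewrite /Hfun /= big_mkcond /=.
apply: (lt_le_trans _ (@sum_ge_term _ _ _ l (t0 k))).
rewrite xkl.
have xi := lt_le_trans xkl (entry_le_xv k l x0).
have xj : 0 < xv x l by rewrite (lt_le_trans xkl) // xs entry_le_xv.
by apply: divr_gt0; apply: mulr_gt0 => //; exact: exprn_gt0.
Qed.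

Lemma H_ratio (R : realType) n adj (a p : 'M[R]_n) h1 x i j :
  (forall i j, 0 <= a i j * p i j) -> 0 < h1 ->
  Gamma adj a p h1 x -> 0 < x i j ->
  a i j * p i j != 0 /\
  a i j * p i j * x i j / (xv x i * xv x j) = Hfun a p x.
Proof.
move=> b0 h0 G xij; have Hp := H_gt0 b0 h0 G.
have [_ HF] : Delta adj a p h1 x /\ Ffun a p x = 0 := G; have := congr1 (fun M : 'M[R]_n => M i j) HF; rewrite /= !mxE.
rewrite (gt_eqF xij) => /eqP; rewrite mulf_eq0 (gt_eqF xij) /= subr_eq0.
rewrite /Defs.ratio; case: ifPn => [_ /eqP E|bn /eqP E]; last by [].
by move: Hp; rewrite -E ltxx.
Qed.

Lemma key_sum (R : realType) n (x y : 'M[R]_n) (m : 'I_n -> 'I_n -> R) c :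
 (forall i j, x i j = c * m i j * xv x i * xv x j) ->
 (forall i, xv x i = 0 -> xv y i = 0) ->
 c * (\sum_i \sum_j m i j * xv y i * xv x j) = \sum_i xv y i.
Proof.
move=> Hx yi0; rewrite mulr_sumr; apply: eq_bigr => i _.
have [xi0|xin] := eqVneq (xv x i) 0.
  rewrite (yi0 i xi0) mulr_sumr big1 // => j _; by rewrite mulr0 mul0r mulr0.
have S1 : c * (\sum_j m i j * xv x j) = 1.
  have E : xv x i * 1 = xv x i * (c * \sum_j m i j * xv x j).
    rewrite mulr1 {1}/xv (eq_bigr _ (fun j _ => Hx i j)) !mulr_sumr.
    by apply: eq_bigr => j _; ring.
  by apply/esym/(mulfI xin).
rewrite -[RHS]mulr1 -S1 !mulr_sumr; apply: eq_bigr => j _; ring.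
Qed.

Lemma Gamma_props (R : realType) n adj (a p : 'M[R]_n) h1 x :
  Gamma adj a p h1 x ->
  [/\ (forall i j, x i j = x j i), (forall i j, 0 <= x i j),
      \sum_(i < n) \sum_(j < n) x i j = 1 & Ffun a p x = 0].
Proof. by case=> -[]. Qed.

Lemma xv0_row (R : realType) n (x : 'M[R]_n) i :
  (forall i j, 0 <= x i j) -> xv x i = 0 -> forall j, x i j = 0.
Proof.
move=> x0 /eqP; rewrite /xv psumr_eq0 // => /allP H j.
by apply/eqP; apply: (implyP (H j (mem_index_enum j))).
Qed.

Lemma same_support (R : realType) n adj (a p : 'M[R]_n) h1 x y :
  (forall i j, 0 <= a i j * p i j) ->
  (forall i j, a i j * p i j = a j i * p j i) -> 0 < h1 ->
  Gamma adj a p h1 x -> Gamma adj a p h1 y ->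
  (forall i j, (0 < x i j) = (0 < y i j)) -> Hfun a p x = Hfun a p y.
Proof.
move=> b0 bs h0 Gx Gy Sxy.
have [xs x0 x1 _] := Gamma_props Gx; have [ys y0 y1 _] := Gamma_props Gy.
set c := Hfun a p x; set d := Hfun a p y.
pose m i j := if 0 < x i j then (a i j * p i j)^-1 else 0.
have gen : forall z : 'M[R]_n, Gamma adj a p h1 z ->
    (forall i j, (0 < x i j) = (0 < z i j)) ->
    forall i j, z i j = Hfun a p z * m i j * xv z i * xv z j.
  move=> z Gz Sz i j; have [zs z0 _ _] := Gamma_props Gz.
  rewrite /m Sz; case: ifPn => zij; last first.
    by apply/eqP; rewrite mulr0 mul0r mul0r eq_le z0 andbT leNgt.
  have [bn E] := H_ratio b0 h0 Gz zij.
  have zi : xv z i != 0 by rewrite gt_eqF // (lt_le_trans zij) // entry_le_xv.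
  have zj : xv z j != 0 by rewrite gt_eqF // (lt_le_trans zij) // zs entry_le_xv.
  move: bn; rewrite mulf_eq0 negb_or => /andP[an pn].
  rewrite -E; field; by rewrite an pn zi zj.
have Hx := gen x Gx (fun _ _ => erefl).
have Hy := gen y Gy Sxy.
have K1 := @key_sum _ _ x y m c Hx.
have K2 := @key_sum _ _ y x m d Hy.
have r1 : forall i, xv x i = 0 -> xv y i = 0.
  move=> i /(xv0_row x0) Z; rewrite /xv big1 // => j _.
  by apply/eqP; rewrite eq_le y0 andbT leNgt -Sxy Z ltxx.
have r2 : forall i, xv y i = 0 -> xv x i = 0.
  move=> i /(xv0_row y0) Z; rewrite /xv big1 // => j _.
  by apply/eqP; rewrite eq_le x0 andbT leNgt Sxy Z ltxx.
move: (K1 r1) (K2 r2); rewrite /xv -/(xv y) -/(xv x) x1 y1.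
set S := \sum_i \sum_j _; set S' := \sum_i \sum_j _.
have -> : S' = S.
  rewrite /S /S' exchange_big /=; apply: eq_bigr => i _; apply: eq_bigr => j _.
  rewrite /m xs bs; ring.
move=> E1 E2; have Sn : S != 0.
  by apply/eqP => S0; move: E1; rewrite S0 mulr0 => /eqP; rewrite eq_sym oner_eq0.
  
by apply: (mulIf Sn); rewrite E1 E2.
Qed.

Lemma H_finite (R : realType) n adj (a p : 'M[R]_n) h1 :
  (forall i j, 0 <= a i j * p i j) ->
  (forall i j, a i j * p i j = a j i * p j i) -> 0 < h1 ->
  exists s : seq R, forall y, Gamma adj a p h1 y -> Hfun a p y \in s.
Proof.
move=> b0 bs h0.
pose pat (y : 'M[R]_n) : {ffun 'I_n * 'I_n -> bool} :=
  [ffun ij => 0 < y ij.1 ij.2].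
pose rep P := xget (0 : 'M[R]_n) [set z | Gamma adj a p h1 z /\ pat z = P].
exists [seq Hfun a p (rep P) | P <- enum {ffun 'I_n * 'I_n -> bool}].
move=> y Gy.
have [Gr Pr] : Gamma adj a p h1 (rep (pat y)) /\ pat (rep (pat y)) = pat y.
  have H := @xgetPex _ (0 : 'M[R]_n) [set z | Gamma adj a p h1 z /\ pat z = pat y]; apply: H; by exists y.
have -> : Hfun a p y = Hfun a p (rep (pat y)).
  apply: (same_support b0 bs h0 Gy Gr) => i j.
  by have := congr1 (fun f : {ffun 'I_n * 'I_n -> bool} => f (i, j)) Pr; rewrite /pat !ffunE /= => ->.
by apply/mapP; exists (pat y) => //; rewrite mem_enum.
Qed.

Lemma gap (R : realType) (s : seq R) c :
  exists2 d, 0 < d & forall v, v \in s -> `|v - c| < d -> v = c.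
Proof.
elim: s => [|v s [d d0 IH]]; first by exists 1.
have [->|vc] := eqVneq v c.
  by exists d => // w; rewrite inE => /orP[/eqP->|ws] //; exact: IH.
exists (Num.min d `|v - c|).
  by rewrite lt_min d0 normr_gt0 subr_eq0.
move=> w; rewrite inE lt_min => /orP[/eqP->|ws] /andP[h1 h2].
  by move: h2; rewrite ltxx.
exact: IH.
Qed.

Lemma xv_cont (R : realType) n i : continuous (fun y : 'M[R]_n => xv y i).
Proof.
rewrite /xv; apply: continuous_big => //; last by move=> j _; exact: coord_continuous.
exact: add_continuous.
Qed.

Lemma loc_const (R : realType) n adj (a p : 'M[R]_n) h1 x :
  (forall i j, 0 <= a i j * p i j) ->
  (forall i j, a i j * p i j = a j i * p j i) -> 0 < h1 ->
  Gamma adj a p h1 x ->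
  exists U : set 'M[R]_n, [/\ open U, U x &
     forall y, U y -> Gamma adj a p h1 y -> Hfun a p y = Hfun a p x].
Proof.
move=> b0 bs h0 Gx.
have [s Hs] := @H_finite _ _ adj a p h1 b0 bs h0.
have [d d0 Hd] := gap s (Hfun a p x).
have [xs x0 x1 _] := Gamma_props Gx.
have [i0 [j0 xp]] : exists i j, 0 < x i j.
  apply: contrapT => Hn; move: x1; rewrite big1 => [/eqP|i _].
    by rewrite eq_sym oner_eq0.
  apply: big1 => j _; apply/eqP; rewrite eq_le x0 andbT leNgt.
  by apply/negP => xij; apply: Hn; exists i, j.
pose f (y : 'M[R]_n) := a i0 j0 * p i0 j0 * y i0 j0 / (xv y i0 * xv y j0).
have [_ Ex] := H_ratio b0 h0 Gx xp.
have xi : xv x i0 != 0 by rewrite gt_eqF // (lt_le_trans xp) // entry_le_xv.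
have xj : xv x j0 != 0 by rewrite gt_eqF // (lt_le_trans xp) // xs entry_le_xv.
have Cf : {for x, continuous f}.
  apply: continuousM.
    apply: (continuousM (s:=fun=> a i0 j0 * p i0 j0) (t:=fun y : 'M[R]_n => y i0 j0));
      first exact: cst_continuous.
    exact: coord_continuous.
  apply: continuousV; first by rewrite mulf_neq0.
  by apply: continuousM; exact: xv_cont.
have N1 : \forall y \near x, 0 < (y : 'M[R]_n) i0 j0.
  exact: (cvgr_gt (f := fun y : 'M[R]_n => y i0 j0) _ (@coord_continuous R n n i0 j0 x) _ xp).
have N2 : \forall y \near x, `|f x - f y| < d.
  exact: (@cvgr_dist_lt _ R^o _ (nbhs x) _ f _ Cf _ d0).
have NN : nbhs x ((fun y : 'M[R]_n => 0 < y i0 j0) `&` (fun y => `|f x - f y| < d)) by exact: filterI.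
move: NN; rewrite nbhsE => -[B oBx BS]; have [oB Bx] := oBx.
exists B; split => // y By Gy.
have [yp Dy] := BS y By.
have [_ Ey] := H_ratio b0 h0 Gy yp.
apply: Hd; first exact: Hs.
by rewrite -Ey -Ex distrC.
Qed.

Lemma open_witness (T : topologicalType) (Q : T -> Prop) :
  open [set w | exists U : set T, [/\ open U, U w & forall v, U v -> Q v]].
Proof.
rewrite openE => w [U [oU Uw HU]].
have NU : nbhs w U := oU w Uw.
apply: filterS NU => u Uu; exists U; split => //; exact: oU.
Qed.

Unset Implicit Arguments. Set Strict Implicit.

Theorem proposition5 (R : realType) (n : nat) (adj : rel 'I_n)
  (a p : 'M[R]_n) (h1 : R) :
  (forall i j, adj i j = adj j i) ->
  (forall i j, a i j = a j i) ->
  (forall i j, 0 <= a i j) ->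
  (forall i j, 0 < a i j -> adj i j) ->
  (forall i j, p i j = p j i) ->
  (forall i j, 0 <= p i j <= 1) ->
  (forall i j, ~~ adj i j -> p i j = 0) ->
  (exists i j, 0 < a i j * p i j) ->
  0 < h1 -> h1 <= 1 ->
  forall x y : 'M[R]_n,
    connected_component (Gamma adj a p h1) x y ->
    Hfun a p x = Hfun a p y.
Proof.
move=> _ sa a0 _ sp p01 _ _ h0 _ x y.
have b0 : forall i j, 0 <= a i j * p i j.
  by move=> i j; rewrite mulr_ge0 //; case/andP: (p01 i j).
have bs : forall i j, a i j * p i j = a j i * p j i by move=> i j; rewrite sa sp.
case=> C [Cx CG cC] Cy.
pose G := Gamma adj a p h1.
pose c := Hfun a p x.
set B := C `&` [set w | Hfun a p w = c].
suff : B = C by move=> E; rewrite -E in Cy; case: Cy.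
apply: cC.
- by exists x; split.
- exists [set w | exists U : set 'M[R]_n, [/\ open U, U w &
     forall v, U v -> (G v -> Hfun a p v = c)]]; first exact: open_witness.
  apply/seteqP; split => w.
    case=> Cw Hw; split => //.
    have [U [oU Uw HU]] := loc_const b0 bs h0 (CG w Cw).
    by exists U; split => // v Uv Gv; rewrite HU // Hw.
  by case=> Cw [U [oU Uw HU]]; split => //; exact: HU (CG w Cw).
- exists (~` [set w | exists U : set 'M[R]_n, [/\ open U, U w &
     forall v, U v -> (G v -> Hfun a p v <> c)]]).
    by apply: open_closedC; exact: open_witness.
  apply/seteqP; split => w.
    case=> Cw Hw; split => // -[U [oU Uw HU]].
    exact: (HU w Uw (CG w Cw)).
  case=> Cw NO; split => //; apply: contrapT => Hw; apply: NO.
  have [U [oU Uw HU]] := loc_const b0 bs h0 (CG w Cw).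
  by exists U; split => // v Uv Gv; rewrite HU.
Qed.
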